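(* Let $B$ be a minimum-weight basis of the weighted uncertainty matroid $\mathcal{M}=(E,\mathcal{I},A,w)$. A set $Q\subseteq E$ is a certificate of $B$ if and only if $Q$ is a vertex cover of the graph $G^B$ (i.e., every edge of $G^B$, including every loop $\{f,f\}$, has an endpoint in $Q$).
   Context: A weighted uncertainty matroid $\mathcal{M}=(E,\mathcal{I},A,w)$ consists of a matroid $M=(E,\mathcal{I})$ on a finite set $E$, for each $e\in E$ a non-empty finite union $A_e$ of bounded real intervals (each open or closed), and a weight $w_e\in A_e$. $L_e=\inf A_e$, $U_e=\sup A_e$. A minimum-weight basis is a basis minimizing total weight. A weight assignment is $w^*$ with $w^*_e\in A_e$, consistent with $Q$ if $w^*_e=w_e$ on $Q$. $Q$ is a certificate of $B$ if for every weight assignment consistent with $Q$, $B$ is a minimum-weight basis with respect to it. For $e\in E\setminus B$ let $C_e$ be the unique circuit in $B\cup\{e\}$, $F_e=\{f\in C_e\setminus\{e\}: U_f>L_e\}$, $\hat F_e=\{f\in C_e\setminus\{e\}: U_f>w_e\}$. The graph $G^B$ has vertex set $E$ and edge set $\bigcup_{e\in E\setminus B}E^B_e$ (edges may be loops $\{f,f\}$), where: (1) if $w_e\ge U_f$ for all $f\in C_e\setminus\{e\}$ and some $f'\in C_e\setminus\{e\}$ has $w_{f'}>L_e$, then $E^B_e=\{\{e,e\}\}$; (2) if $w_e\ge U_f$ for all $f\in C_e\setminus\{e\}$ and $w_f\le L_e$ for all $f\in C_e\setminus\{e\}$, then $E^B_e=\{\{e,f\}: f\in F_e\}$; (3) if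 some $f\in C_e\setminus\{e\}$ has $w_e<U_f$ and some $f'\in C_e\setminus\{e\}$ has $w_{f'}>L_e$, then $E^B_e=\{\{f,f\}: f\in\hat F_e\cup\{e\}\}$; (4) if some $f\in C_e\setminus\{e\}$ has $w_e<U_f$ and $w_{f'}\le L_e$ for all $f'\in C_e\setminus\{e\}$, then $E^B_e=\{\{e,f\}: f\in F_e\setminus\hat F_e\}\cup\{\{f,f\}: f\in\hat F_e\}$. *)

(* Defs.v *)
From HB Require Import structures.
From mathcomp Require Import all_boot all_order all_algebra.
From mathcomp Require Import classical_sets boolp reals.
Set Implicit Arguments. Unset Strict Implicit. Unset Printing Implicit Defensive.
Import Order.TTheory GRing.Theory Num.Theory.
Local Open Scope ring_scope.


Definition matroid_axioms (E : finType) (indep : {set E} -> bool) : Prop :=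
  [/\ indep (finset.set0 : {set E}),
      (forall X Y : {set E}, Y \subset X -> indep X -> indep Y) &
      (forall X Y : {set E}, indep X -> indep Y -> (#|X| < #|Y|)%N ->
         exists2 x, x \in Y :\: X & indep (x |: X))].

Definition is_basis (E : finType) (indep : {set E} -> bool) (B : {set E}) : bool :=
  maxset (fun X => indep X) B.
Definition is_circuit (E : finType) (indep : {set E} -> bool) (C : {set E}) : bool :=
  minset (fun X => ~~ indep X) C.

(** Uncertainty areas: a finite list of bounded intervals, each either closed
    [(true, a, b)] = [a,b] (with a <= b) or open [(false, a, b)] = (a,b)
    (with a < b).  The area is their union. *)
Definition itv_ok (R : realType) (t : bool * R * R) : bool :=
  if t.1.1 then t.1.2 <= t.2 else t.1.2 < t.2.
Definition in_itv_ (R : realType) (t : bool * R * R) (x : R) : bool :=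
  if t.1.1 then (t.1.2 <= x) && (x <= t.2) else (t.1.2 < x) && (x < t.2).
Definition in_area (R : realType) (s : seq (bool * R * R)) (x : R) : bool :=
  has (fun t => in_itv_ t x) s.
Definition area_ok (R : realType) (s : seq (bool * R * R)) : Prop :=
  all (@itv_ok R) s /\ exists x, in_area s x.

Definition Lo (R : realType) (s : seq (bool * R * R)) : R := inf [set x | in_area s x]%classic.
Definition Up (R : realType) (s : seq (bool * R * R)) : R := sup [set x | in_area s x]%classic.

Definition weight (E : finType) (R : realType) (w : E -> R) (X : {set E}) : R :=
  \sum_(e in X) w e.

Definition min_weight_basis (E : finType) (R : realType) (indep : {set E} -> bool)
    (w : E -> R) (B : {set E}) : Prop :=
  is_basis indep B /\
  forall B' : {set E}, is_basis indep B' -> weight w B <= weight w B'.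

Definition certificate (E : finType) (R : realType) (indep : {set E} -> bool)
    (A : E -> seq (bool * R * R)) (w : E -> R) (B Q : {set E}) : Prop :=
  forall w' : E -> R,
    (forall e, in_area (A e) (w' e)) ->
    (forall e, e \in Q -> w' e = w e) ->
    min_weight_basis indep w' B.

(** The edge set E^B_e (given the circuit C = C_e): the unordered pair {x,y}
    belongs to it (edges are represented by ordered pairs; loops as (f,f)). *)
Definition edge_of (E : finType) (R : realType)
    (A : E -> seq (bool * R * R)) (w : E -> R) (e : E) (C : {set E}) (x y : E) : Prop :=
  let D := C :\ e in
  let L := fun f => Lo (A f) in
  let U := fun f => Up (A f) in
  let is_pair := fun a b => (x = a /\ y = b) \/ (x = b /\ y = a) in
  ((forall f, f \in D -> w e >= U f) /\ (exists2 f', f' \in D & w f' > L e) /\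
     is_pair e e)
  \/
  ((forall f, f \in D -> w e >= U f) /\ (forall f, f \in D -> w f <= L e) /\
     exists2 f, f \in D /\ U f > L e & is_pair e f)
  \/
  ((exists2 f, f \in D & w e < U f) /\ (exists2 f', f' \in D & w f' > L e) /\
     ((exists2 f, f \in D /\ U f > w e & is_pair f f) \/ is_pair e e))
  \/
  ((exists2 f, f \in D & w e < U f) /\ (forall f', f' \in D -> w f' <= L e) /\
     ((exists2 f, [/\ f \in D, U f > L e & ~ (U f > w e)] & is_pair e f) \/
      (exists2 f, f \in D /\ U f > w e & is_pair f f))).

Definition GB_edge (E : finType) (R : realType) (indep : {set E} -> bool)
    (A : E -> seq (bool * R * R)) (w : E -> R) (B : {set E}) (x y : E) : Prop :=
  exists e, e \notin B /\
    exists2 C, is_circuit indep C /\ C \subset e |: B & edge_of A w e C x y.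

Definition vertex_cover (E : finType) (R : realType) (indep : {set E} -> bool)
    (A : E -> seq (bool * R * R)) (w : E -> R) (B Q : {set E}) : Prop :=
  forall x y, GB_edge indep A w B x y -> x \in Q \/ y \in Q.

(* Main.v *)
Require Import Defs.
From mathcomp Require Import all_boot all_order all_algebra.
From mathcomp Require Import classical_sets boolp reals.
Set Implicit Arguments. Unset Strict Implicit. Unset Printing Implicit Defensive.
Import Order.TTheory GRing.Theory Num.Theory.
Local Open Scope ring_scope.

Section Reals.
Variable R : realType.

Lemma area_ub (s : seq (bool * R * R)) x : in_area s x -> x <= \sum_(t <- s) `|t.2|.
Proof.
elim: s => [|t s IH] //=; rewrite /in_area /= big_cons => /orP [H|H].
- have : x <= t.2 by move: H; rewrite /in_itv_; case: ifP => _ /andP[_ h] //; exact: ltW.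
  move=> h; apply: (le_trans h); apply: (le_trans (ler_norm _)).
  rewrite lerDl; apply: sumr_ge0 => ? _; exact: normr_ge0.
- apply: (le_trans (IH H)); rewrite lerDr; exact: normr_ge0.
Qed.

Lemma area_lb (s : seq (bool * R * R)) x : in_area s x -> - \sum_(t <- s) `|t.1.2| <= x.
Proof.
elim: s => [|t s IH] //=; rewrite /in_area /= big_cons => /orP [H|H].
- have : t.1.2 <= x by move: H; rewrite /in_itv_; case: ifP => _ /andP[h _] //; exact: ltW.
  move=> h; apply: le_trans h; rewrite lerNl; apply: (le_trans (ler_norm _)).
  by rewrite normrN lerDl; apply: sumr_ge0 => ? _; exact: normr_ge0.
- apply: le_trans (IH H); rewrite lerN2 lerDr; exact: normr_ge0.
Qed.

Lemma has_ub_area (s : seq (bool * R * R)) : has_ubound [set x | in_area s x]%classic.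
Proof. by exists (\sum_(t <- s) `|t.2|) => x /= /area_ub. Qed.
Lemma has_lb_area (s : seq (bool * R * R)) : has_lbound [set x | in_area s x]%classic.
Proof. by exists (- \sum_(t <- s) `|t.1.2|) => x /= /area_lb. Qed.

Lemma le_Up (s : seq (bool * R * R)) x : in_area s x -> x <= Up s.
Proof. move=> h; exact: (ub_le_sup (has_ub_area s)). Qed.
Lemma Lo_le (s : seq (bool * R * R)) x : in_area s x -> Lo s <= x.
Proof. move=> h; exact: (ge_inf (has_lb_area s)). Qed.

Lemma Up_le (s : seq (bool * R * R)) c : area_ok s -> (forall x, in_area s x -> x <= c) -> Up s <= c.
Proof. case=> _ [y hy] h; apply: ge_sup; first by exists y. by move=> x /h. Qed.
Lemma le_Lo (s : seq (bool * R * R)) c : area_ok s -> (forall x, in_area s x -> c <= x) -> c <= Lo s.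
Proof. case=> _ [y hy] h; apply: lb_le_inf; first by exists y. by move=> x /h. Qed.

Lemma lt_Up (s : seq (bool * R * R)) c : area_ok s -> c < Up s -> exists x, in_area s x /\ c < x.
Proof.
move=> ok hc; apply: contrapT => hn; move: hc; rewrite ltNge => /negP; apply; apply: Up_le => //.
move=> x hx; rewrite leNgt; apply/negP => hcx; apply: hn; by exists x.
Qed.
Lemma Lo_lt (s : seq (bool * R * R)) c : area_ok s -> Lo s < c -> exists x, in_area s x /\ x < c.
Proof.
move=> ok hc; apply: contrapT => hn; move: hc; rewrite ltNge => /negP; apply; apply: le_Lo => //.
move=> x hx; rewrite leNgt; apply/negP => hcx; apply: hn; by exists x.
Qed.
End Reals.

Section Matroid.
Variable E : finType.
Variable indep : {set E} -> bool.
Hypothesis hmat : matroid_axioms indep.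

Let isub : forall X Y : {set E}, Y \subset X -> indep X -> indep Y.
Proof. by case: hmat. Qed.
Let iaug : forall X Y : {set E}, indep X -> indep Y -> (#|X| < #|Y|)%N ->
         exists2 x, x \in Y :\: X & indep (x |: X).
Proof. by case: hmat. Qed.

Definition maxin (S M : {set E}) : Prop :=
  [/\ M \subset S, indep M & forall x, x \in S -> x \notin M -> ~~ indep (x |: M)].

Lemma maxin_card S M Y : maxin S M -> indep Y -> Y \subset S -> (#|Y| <= #|M|)%N.
Proof.
case=> sMS iM hM iY sYS; rewrite leqNgt; apply/negP => lt.
have [x /setDP [xY xM] ix] := iaug iM iY lt.
by move: (hM x (fintype.subsetP sYS x xY) xM); rewrite ix.
Qed.

Lemma maxin_exists (S X : {set E}) : indep X -> X \subset S -> exists2 M, maxin S M & X \subset M.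
Proof.
move=> iX sXS.
have PX : (fun Z => indep Z && (Z \subset S)) X by rewrite /= iX sXS.
have [M /maxsetP [/andP [iM sMS] hM] sXM] := @maxset_exists _ (fun Z => indep Z && (Z \subset S)) X PX.
exists M => //; split => // x xS xM; apply/negP => ix.
have := hM (x |: M); rewrite ix finset.subUset finset.sub1set xS sMS /= => /(_ isT (finset.subsetUr _ _)) eq.
by move: xM; rewrite -eq setU11.
Qed.

Lemma basis_maxin B : is_basis indep B -> maxin [set: E] B.
Proof.
move/maxsetP => [iB hB]; split => //; try exact: finset.subsetT; move=> x _ xB.
apply/negP => ix; have eq := hB _ ix (finset.subsetUr _ _).
by move: xB; rewrite -eq setU11.
Qed.

Lemma basis_indep B : is_basis indep B -> indep B.
Proof. by move/maxsetP => []. Qed.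

Lemma basis_card (B Y : {set E}) : is_basis indep B -> indep Y -> (#|Y| <= #|B|)%N.
Proof. move=> hB iY; exact: maxin_card (basis_maxin hB) iY (finset.subsetT _). Qed.

Lemma basis_of_card (B X : {set E}) : is_basis indep B -> indep X -> (#|B| <= #|X|)%N -> is_basis indep X.
Proof.
move=> hB iX hc; apply/maxsetP; split => // Y iY sXY.
apply/eqP; rewrite eq_sym eqEcard sXY /=.
exact: leq_trans (basis_card hB iY) hc.
Qed.

Lemma bases_card B B' : is_basis indep B -> is_basis indep B' -> #|B| = #|B'|.
Proof.
move=> hB hB'; apply/eqP; rewrite eqn_leq.
by rewrite (basis_card hB' (basis_indep hB)) (basis_card hB (basis_indep hB')).
Qed.

Lemma circuit_dep C : is_circuit indep C -> ~~ indep C.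
Proof. by move/minsetP => []. Qed.

Lemma circuit_del C f : is_circuit indep C -> f \in C -> indep (C :\ f).
Proof.
move/minsetP=> [_ h] fC; apply: contraT => d.
have eq := h _ d (finset.subsetDl _ _).
by move: fC; rewrite -eq setD11.
Qed.

Lemma dep_super (X Y : {set E}) : X \subset Y -> ~~ indep X -> ~~ indep Y.
Proof. by move=> s; apply: contra; apply: isub. Qed.

Lemma circuit_in (B C : {set E}) e : indep B -> is_circuit indep C -> C \subset e |: B -> e \in C.
Proof.
move=> iB hC sC; apply: contraT => eC.
have sCB : C \subset B.
  apply/fintype.subsetP => x xC; have := fintype.subsetP sC x xC; rewrite in_setU1 => /orP [/eqP ex|//].
  by move: eC; rewrite -ex xC.
by move: (circuit_dep hC); rewrite (isub sCB iB).
Qed.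

Lemma circ_fB (B C : {set E}) e f : C \subset e |: B -> f \in C :\ e -> f \in B.
Proof.
move=> sC /setD1P [fe fC]; by have := fintype.subsetP sC f fC; rewrite in_setU1 (negbTE fe).
Qed.

Lemma exchange (B : {set E}) e (C : {set E}) f : is_basis indep B -> e \notin B -> is_circuit indep C ->
  C \subset e |: B -> f \in C :\ e -> is_basis indep (e |: (B :\ f)).
Proof.
move=> hB eB hC sC fCe.
have fB := circ_fB sC fCe.
move: fCe => /setD1P [fe fC].
set S := e |: (B :\ f).
have iCf := circuit_del hC fC.
have sCS : C :\ f \subset S.
  apply/fintype.subsetP => x /setD1P [xf xC]; rewrite /S in_setU1 in_setD1 xf /=.
  by move: (fintype.subsetP sC x xC); rewrite in_setU1.
have [M hM sCM] := maxin_exists iCf sCS.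
case: (hM) => sMS iM hMm.
have cB : (#|B| <= #|M|)%N.
  rewrite leqNgt; apply/negP => lt.
  have [x /setDP [xB xM] ix] := iaug iM (basis_indep hB) lt.
  case: (eqVneq x f) => [xf | xf].
  - subst x.
    have : ~~ indep (f |: M).
      apply: dep_super (circuit_dep hC); apply/fintype.subsetP => y yC; rewrite in_setU1.
      case: eqP => //= /eqP yf; apply: (fintype.subsetP sCM); by rewrite in_setD1 yC andbT.
    by rewrite ix.
  - have xS : x \in S by rewrite /S in_setU1 in_setD1 xf xB orbT.
    by move: (hMm x xS xM); rewrite ix.
have cS : #|S| = #|B|.
  by rewrite /S cardsU1 in_setD1 (negbTE eB) andbF (cardsD1 f B) fB.
have eMS : M = S by apply/eqP; rewrite eqEcard sMS cS cB.
apply: basis_of_card hB _ _; first by rewrite -eMS.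
by rewrite cS.
Qed.

Variable R : realType.

Lemma weight_exch (w : E -> R) (B : {set E}) e f : e \notin B -> f \in B ->
  weight w (e |: (B :\ f)) = w e + weight w B - w f.
Proof.
move=> eB fB; rewrite /weight big_setU1 /=; last by rewrite in_setD1 (negbTE eB) andbF.
by rewrite (big_setD1 f fB) /= [w f + _]addrC addrA addrK.
Qed.

Lemma EX (w : E -> R) (B : {set E}) e (C : {set E}) f : min_weight_basis indep w B -> e \notin B ->
  is_circuit indep C -> C \subset e |: B -> f \in C :\ e -> w f <= w e.
Proof.
case=> hB hmin eB hC sC fCe; rewrite leNgt; apply/negP => lt.
have := hmin _ (exchange hB eB hC sC fCe).
rewrite weight_exch // ?(circ_fB sC fCe) //.
move=> h.
by move: h lt; rewrite -subr_ge0 addrAC addrK subr_ge0 => h; rewrite ltNge h.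
Qed.

Lemma cycle_opt (w : E -> R) (B : {set E}) : is_basis indep B ->
  (forall e C f, e \notin B -> is_circuit indep C -> C \subset e |: B -> f \in C :\ e -> w f <= w e) ->
  forall B', is_basis indep B' -> weight w B <= weight w B'.
Proof.
move=> hB hc B' hB'.
move: {2}#|B' :\: B| (leqnn #|B' :\: B|) => n; elim: n B' hB' => [|n IH] B' hB' hn.
  have sB'B : B' \subset B by rewrite -finset.setD_eq0 -cards_eq0 -leqn0.
  have [_ h] := maxsetP hB'.
  by rewrite (h _ (basis_indep hB) sB'B).
case: (finset.set_0Vmem (B' :\: B)) => [e0 | [e /setDP [eB' eB]]].
  by apply: (IH B' hB'); rewrite e0 cards0.
have de : ~~ indep (e |: B).
  apply/negP => ie; have [_ h] := maxsetP hB; have eq := h _ ie (finset.subsetUr _ _).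
  by move: eB; rewrite -eq setU11.
have [C hC sC] := minset_exists (P := fun X => ~~ indep X) de.
have eC := circuit_in (basis_indep hB) hC sC.
set X := B' :\ e.
have cX : #|B'| = #|X|.+1 by rewrite (cardsD1 e B') eB'.
have iX : indep X by apply: isub (basis_indep hB'); apply: finset.subsetDl.
have : exists f, [/\ f \in C :\ e, f \notin X & indep (f |: X)].
  apply: contrapT => hno.
  have hX : maxin (X :|: (C :\ e)) X.
    split => //; first exact: finset.subsetUl.
    move=> x xZ xX; apply/negP => ix; apply: hno; exists x; split => //.
    by move: xZ; rewrite finset.in_setU (negbTE xX).
  have iCe := circuit_del hC eC.
  have [M hM sCM] := maxin_exists iCe (finset.subsetUr X _).
  case: (hM) => sMZ iM hMm.
  have cM : (#|M| <= #|X|)%N := maxin_card hX iM sMZ.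
  have lt : (#|M| < #|B'|)%N by rewrite cX ltnS.
  have [x /setDP [xB' xM] ix] := iaug iM (basis_indep hB') lt.
  case: (eqVneq x e) => [xe|xe].
  - subst x.
    have : ~~ indep (e |: M).
      apply: dep_super (circuit_dep hC); apply/fintype.subsetP => y yC; rewrite in_setU1.
      case: eqP => //= /eqP ye; apply: (fintype.subsetP sCM); by rewrite in_setD1 yC andbT.
    by rewrite ix.
  - have xZ : x \in X :|: (C :\ e) by rewrite finset.in_setU /X in_setD1 xe xB'.
    by move: (hMm x xZ xM); rewrite ix.
case=> f [fCe fX ifX].
have fB := circ_fB sC fCe.
have fe : f != e by move: fCe => /setD1P [].
set B'' := f |: X.
have hB'' : is_basis indep B''.
  apply: (basis_of_card hB ifX).
  by rewrite (bases_card hB hB') cardsU1 fX cX.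
have hw : weight w B' = w e + weight w X by rewrite /weight (big_setD1 e eB').
have hw'' : weight w B'' = w f + weight w X by rewrite /weight big_setU1.
have hfe : w f <= w e := hc e C f eB hC sC fCe.
apply: le_trans (IH B'' hB'' _) _; last by rewrite hw hw'' lerD2r.
have eq : B'' :\: B = (B' :\: B) :\ e.
  apply/setP => x; rewrite !inE.
  case: (eqVneq x f) => [->|xf]; first by rewrite fB (negbTE fe).
  by case: (x \in B); case: (x \in B'); case: (x == e).
have := cardsD1 e (B' :\: B); rewrite inE eB eB' /= -eq => h.
by rewrite h add1n ltnS in hn.
Qed.

End Matroid.

Section Main.
Variables (R : realType) (E : finType) (indep : {set E} -> bool)
    (A : E -> seq (bool * R * R)) (w : E -> R) (B Q : {set E}).
Hypotheses (hmat : matroid_axioms indep) (hok : forall e, area_ok (A e))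
  (hw : forall e, in_area (A e) (w e)) (hmin : min_weight_basis indep w B).

Let U f := Up (A f).
Let L f := Lo (A f).

Definition okp e f :=
  (e \notin Q -> f \notin Q -> U f <= L e) /\ (e \notin Q -> f \in Q -> w f <= L e) /\
  (e \in Q -> f \notin Q -> U f <= w e).

Definition PC := forall e C f, e \notin B -> is_circuit indep C -> C \subset e |: B ->
  f \in C :\ e -> okp e f.

Lemma cert_PC : certificate indep A w B Q -> PC.
Proof.
move=> hcert e C f eB hC sC fCe.
have fe : f != e by move: fCe => /setD1P [].
have ef : (e == f) = false by rewrite eq_sym (negbTE fe).
have neg : forall w' : E -> R, (forall g, in_area (A g) (w' g)) ->
    (forall g, g \in Q -> w' g = w g) -> w' e < w' f -> False.
  move=> w' ha hq lt; have hm := hcert w' ha hq.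
  by have := EX hmat hm eB hC sC fCe; rewrite leNgt lt.
split; [|split].
- move=> eQ fQ; rewrite leNgt; apply/negP => lt.
  have [y [ya ylt]] := Lo_lt (hok e) lt.
  have [x [xa xgt]] := lt_Up (hok f) ylt.
  apply: (neg (fun g => if g == f then x else if g == e then y else w g)).
  + move=> g; case: eqP => [->//|_]; case: eqP => [->//|_]; exact: hw.
  + move=> g gQ; case: eqP => [gf|_]; first by move: fQ; rewrite -gf gQ.
    case: eqP => [ge|//]; by move: eQ; rewrite -ge gQ.
  + by rewrite ef !eqxx.
- move=> eQ fQ; rewrite leNgt; apply/negP => lt.
  have [y [ya ylt]] := Lo_lt (hok e) lt.
  apply: (neg (fun g => if g == e then y else w g)).
  + move=> g; case: eqP => [->//|_]; exact: hw.
  + move=> g gQ; case: eqP => [ge|//]; by move: eQ; rewrite -ge gQ.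
  + by rewrite (negbTE fe) !eqxx.
- move=> eQ fQ; rewrite leNgt; apply/negP => lt.
  have [x [xa xgt]] := lt_Up (hok f) lt.
  apply: (neg (fun g => if g == f then x else w g)).
  + move=> g; case: eqP => [->//|_]; exact: hw.
  + move=> g gQ; case: eqP => [gf|//]; by move: fQ; rewrite -gf gQ.
  + by rewrite ef !eqxx.
Qed.

Lemma PC_cert : PC -> certificate indep A w B Q.
Proof.
move=> hpc w' ha hq; split; first by case: hmin.
apply: (cycle_opt hmat); first by case: hmin.
move=> e C f eB hC sC fCe.
have [h1 [h2 h3]] := hpc e C f eB hC sC fCe.
have hef := EX hmat hmin eB hC sC fCe.
case: (boolP (e \in Q)) => eQ; case: (boolP (f \in Q)) => fQ.
- by rewrite !hq.
- rewrite (hq e eQ); apply: le_trans (h3 eQ fQ); exact: le_Up.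
- rewrite (hq f fQ); apply: le_trans (h2 eQ fQ) _; exact: Lo_le.
- apply: le_trans (le_Up (ha f)) _; apply: le_trans (h1 eQ fQ) _; exact: Lo_le.
Qed.

Lemma VC_PC : vertex_cover indep A w B Q -> PC.
Proof.
move=> hvc e C f eB hC sC fCe.
have contra2 : forall x y, edge_of A w e C x y -> x \notin Q -> y \notin Q -> False.
  move=> x y h xQ yQ.
  have [] := hvc x y (ex_intro _ e (conj eB (ex_intro2 _ _ C (conj hC sC) h))).
    by apply/negP.
  by apply/negP.
have hLe : L e <= w e by apply: Lo_le.
have hwU : forall g, w g <= U g by move=> g; apply: le_Up.
split; [|split].
- move=> eQ fQ; rewrite leNgt; apply/negP => lt.
  case: (pselect (exists2 f', f' \in C :\ e & L e < w f')) => [ex|nex].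
  + case: (pselect (forall g, g \in C :\ e -> U g <= w e)) => [all|nall].
    * apply: (contra2 e e _ eQ eQ); left; split => //; split => //; by left.
    * have ex3 : exists2 g, g \in C :\ e & w e < U g.
        apply: contrapT => h; apply: nall => g gD; rewrite leNgt; apply/negP => lt'.
        by apply: h; exists g.
      apply: (contra2 e e _ eQ eQ); right; right; left; split => //; split => //; by right; left.
  + have allw : forall g, g \in C :\ e -> w g <= L e.
      move=> g gD; rewrite leNgt; apply/negP => lt'; apply: nex; by exists g.
    case: (pselect (forall g, g \in C :\ e -> U g <= w e)) => [all|nall].
    * apply: (contra2 e f _ eQ fQ); right; left; split => //; split => //.
      by exists f => //; left.
    * have ex3 : exists2 g, g \in C :\ e & w e < U g.
        apply: contrapT => h; apply: nall => g gD; rewrite leNgt; apply/negP => lt'.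
        by apply: h; exists g.
      case: (ltP (w e) (U f)) => hf.
      -- apply: (contra2 f f _ fQ fQ); right; right; right; split => //; split => //.
         by right; exists f; [split | left].
      -- apply: (contra2 e f _ eQ fQ); right; right; right; split => //; split => //.
         left; exists f; [split => //; by rewrite ltNge hf | by left].
- move=> eQ fQ; rewrite leNgt; apply/negP => lt.
  have ex : exists2 f', f' \in C :\ e & L e < w f' by exists f.
  case: (pselect (forall g, g \in C :\ e -> U g <= w e)) => [all|nall].
  + apply: (contra2 e e _ eQ eQ); left; split => //; split => //; by left.
  + have ex3 : exists2 g, g \in C :\ e & w e < U g.
      apply: contrapT => h; apply: nall => g gD; rewrite leNgt; apply/negP => lt'.
      by apply: h; exists g.
    apply: (contra2 e e _ eQ eQ); right; right; left; split => //; split => //; by right; left.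
- move=> eQ fQ; rewrite leNgt; apply/negP => lt.
  have ex3 : exists2 g, g \in C :\ e & w e < U g by exists f.
  case: (pselect (exists2 f', f' \in C :\ e & L e < w f')) => [ex|nex].
  + apply: (contra2 f f _ fQ fQ); right; right; left; split => //; split => //.
    by left; exists f; [split | left].
  + have allw : forall g, g \in C :\ e -> w g <= L e.
      move=> g gD; rewrite leNgt; apply/negP => lt'; apply: nex; by exists g.
    apply: (contra2 f f _ fQ fQ); right; right; right; split => //; split => //.
    by right; exists f; [split | left].
Qed.

Lemma pair_cov (x y a b : E) : (x = a /\ y = b) \/ (x = b /\ y = a) ->
  a \in Q \/ b \in Q -> x \in Q \/ y \in Q.
Proof. by case=> [[-> ->]|[-> ->]] []; auto. Qed.

Lemma PC_VC : PC -> vertex_cover indep A w B Q.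
Proof.
move=> hpc x y [e [eB [C [hC sC] hE]]].
have he1 : (exists2 f', f' \in C :\ e & L e < w f') -> e \in Q.
  case: (boolP (e \in Q)) => // eQ [f' f'D lt].
  have [h1 [h2 _]] := hpc e C f' eB hC sC f'D.
  case: (boolP (f' \in Q)) => f'Q.
    by have := h2 eQ f'Q; rewrite leNgt lt.
  have := le_trans (le_Up (hw f')) (h1 eQ f'Q); by rewrite leNgt lt.
have hpair : forall f, f \in C :\ e -> L e < U f -> e \in Q \/ f \in Q.
  move=> f fD lt; have [h1 _] := hpc e C f eB hC sC fD.
  case: (boolP (e \in Q)) => eQ; first by left.
  case: (boolP (f \in Q)) => fQ; first by right.
  by have := h1 eQ fQ; rewrite leNgt lt.
have hloop : forall f, f \in C :\ e -> w e < U f -> f \in Q.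
  move=> f fD lt; have [h1 [_ h3]] := hpc e C f eB hC sC fD.
  case: (boolP (f \in Q)) => // fQ.
  case: (boolP (e \in Q)) => eQ.
    by have := h3 eQ fQ; rewrite leNgt lt.
  have := le_trans (h1 eQ fQ) (Lo_le (hw e)); by rewrite leNgt lt.
case: hE => [[_ [ex p]] | [[_ [_ [f [fD lt] p]]] | [[_ [ex [[f [fD lt] p] | p]]] |
  [_ [_ [[f [fD lt nlt] p] | [f [fD lt] p]]]]]]].
- apply: (pair_cov p); left; exact: he1 ex.
- apply: (pair_cov p); exact: hpair.
- apply: (pair_cov p); left; exact: hloop.
- apply: (pair_cov p); left; exact: he1 ex.
- apply: (pair_cov p); exact: hpair.
- apply: (pair_cov p); left; exact: hloop.
Qed.

Lemma main : certificate indep A w B Q <-> vertex_cover indep A w B Q.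
Proof.
split => h; first exact: PC_VC (cert_PC h).
exact: PC_cert (VC_PC h).
Qed.

End Main.

Theorem corollary27 (R : realType) (E : finType) (indep : {set E} -> bool)
    (A : E -> seq (bool * R * R)) (w : E -> R) (B Q : {set E}) :
  matroid_axioms indep ->
  (forall e, area_ok (A e)) ->
  (forall e, in_area (A e) (w e)) ->
  min_weight_basis indep w B ->
  certificate indep A w B Q <-> vertex_cover indep A w B Q.
Proof. move=> hmat hok hw hmin; exact: main. Qed.
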